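(* Let $\phi:\mathbb{N}_0\to\mathbb{N}_0$ satisfy $\phi(0)=0$ and $\phi(x)\neq x$ for all $x\in\mathbb{N}$, let $k,n\ge1$, and assume the local function $\phi_n$ has no cycle. Let $J_{n,k}(\phi)=\{x\in D_n:\phi_n^k(x)\in D_n\}$. Then $|J_{n,k}(\phi)|\le\max(n-k,0)$. In particular, $|J_{n,1}(\phi)|=n-|\widetilde{D}_n|$.
   Context: $\mathbb{N}=\{1,2,\dots\}$, $\mathbb{N}_0=\mathbb{N}\cup\{0\}$, $D_n=\{1,\dots,n\}$, $D_{n,0}=D_n\cup\{0\}$. The local function $\phi_n:D_{n,0}\to D_{n,0}$ is $\phi_n(x)=\phi(x)$ if $x\in D_n$ and $\phi(x)\in D_n$, and $\phi_n(x)=0$ otherwise. ''$\phi_n$ has no cycle'' means there are no $m\ge2$ and $x\in D_n$ with $\phi_n^m(x)=x$. The height of $x\in D_n$ is $h(x)=\min\{k\in\mathbb{N}:\phi_n^k(x)=0\}$, and the orbit of $x$ is $\Omega(x)=\{\phi_n^j(x):0\le j<h(x)\}$. $\widetilde{D}_n$ denotes the set of equivalence classes of $D_n$ under the equivalence relation $x\sim y\iff\Omega(x)\cap\Omega(y)\neq\emptyset$. *)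

(* Defs.v *)
From mathcomp Require Import all_boot all_order.
Unset Printing Implicit Defensive.

(* phi : N_0 -> N_0 is modelled as phi : nat -> nat. D_{n,0} = {0..n} is 'I_n.+1 *)

Definition phin (phi : nat -> nat) (n : nat) (x : nat) : nat :=
  if (0 < x <= n) && (0 < phi x <= n) then phi x else 0.

Definition no_cycle (phi : nat -> nat) (n : nat) : Prop :=
  forall (m x : nat), 2 <= m -> 0 < x <= n -> iter m (phin phi n) x <> x.

Definition Dn (n : nat) : {set 'I_n.+1} := [set x : 'I_n.+1 | 0 < x].

Definition Jset (phi : nat -> nat) (n k : nat) : {set 'I_n.+1} :=
  [set x : 'I_n.+1 | (0 < x <= n) && (0 < iter k (phin phi n) x <= n)].

(* Orbit Omega(x) = {phi_n^j(x) : 0 <= j < h(x)}, i.e. the iterates phi_n^j(x)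
   such that phi_n^i(x) <> 0 for all i <= j.  Indices j are ranged over 0..n;
   this loses nothing. *)
Definition Omega (phi : nat -> nat) (n : nat) (x : nat) : {set 'I_n.+1} :=
  [set y : 'I_n.+1 | [exists j : 'I_n.+1,
      (iter j (phin phi n) x == y) &&
      [forall i : 'I_j.+1, iter i (phin phi n) x != 0]]].

Definition orbit_rel (phi : nat -> nat) (n : nat) : rel 'I_n.+1 :=
  fun x y => ~~ [disjoint Omega phi n x & Omega phi n y].

Definition Dtilde (phi : nat -> nat) (n : nat) : {set {set 'I_n.+1}} :=
  equivalence_partition (orbit_rel phi n) (Dn n).

(* Main.v *)
Require Import Defs.
From mathcomp Require Import all_boot all_order.

Lemma phin0 phi n : phin phi n 0 = 0.
Proof. by rewrite /phin. Qed.

Lemma phin_le phi n x : phin phi n x <= n.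
Proof. rewrite /phin; case: ifP => // /andP [_ /andP [_ ->]] //. Qed.

Lemma iter_phin0 phi n j : iter j (phin phi n) 0 = 0.
Proof. by elim: j => //= j ->; rewrite phin0. Qed.

Lemma iter_phin_le phi n j x : x <= n -> iter j (phin phi n) x <= n.
Proof. by case: j => //= j _; apply: phin_le. Qed.

Definition acyc phi n :=
  forall x m, 0 < x <= n -> 0 < m -> iter m (phin phi n) x <> x.

Lemma iter_ge_zero phi n j i x : i <= j ->
  iter i (phin phi n) x = 0 -> iter j (phin phi n) x = 0.
Proof. move=> le Hi; by rewrite -(subnK le) iterD Hi iter_phin0. Qed.
Arguments iter_ge_zero {phi n j i x}.

Lemma iter_n0 phi n x : acyc phi n -> x <= n -> iter n (phin phi n) x = 0.
Proof.
move=> Hac xn; apply/eqP; apply/negPn/negP => Hnz.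
have nz : forall i, i <= n -> iter i (phin phi n) x != 0.
  move=> i le; apply/negP => /eqP Hi; by rewrite (iter_ge_zero le Hi) in Hnz.
have noeq : forall i j, i < j -> j <= n ->
    iter i (phin phi n) x = iter j (phin phi n) x -> False.
  move=> i j ij jn E.
  have y0 := nz i (leq_trans (ltnW ij) jn).
  apply: (Hac (iter i (phin phi n) x) (j - i)).
  - by rewrite lt0n y0 iter_phin_le.
  - by rewrite subn_gt0.
  - by rewrite -iterD subnK ?(ltnW ij).
pose g := fun i : 'I_n.+1 => (inord (iter i (phin phi n) x) : 'I_n.+1).
have ginj : injective g.
  move=> i j /(congr1 (@nat_of_ord _)); rewrite /g !inordK ?ltnS ?iter_phin_le // => E.
  apply/val_inj => /=.
  case: (ltngtP i j) => // lt; exfalso.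
  - exact: (noeq i j lt (ltnSE (ltn_ord j)) E).
  - exact: (noeq j i lt (ltnSE (ltn_ord i)) (esym E)).
case: (injF_bij ginj) => g' _ K.
have := K ord0; rewrite /g => /(congr1 (@nat_of_ord _)); rewrite inordK ?ltnS ?iter_phin_le //=.
by move/eqP; rewrite (negbTE (nz _ (ltnSE (ltn_ord _)))).
Qed.
Arguments iter_n0 {phi n x}.

Lemma OmegaP phi n x (y : 'I_n.+1) : acyc phi n -> x <= n ->
  (y \in Omega phi n x) <-> (0 < y /\ exists j, iter j (phin phi n) x = y).
Proof.
move=> Hac xn; rewrite inE; split.
- case/existsP => j /andP [/eqP E /forallP A]; split; last by exists j.
  by have := A ord_max; rewrite /= E lt0n.
- case=> y0 [j E].
  have jn : j < n.+1.
    rewrite ltnS leqNgt; apply/negP => le.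
    by move: y0; rewrite -E (iter_ge_zero (ltnW le) (iter_n0 Hac xn)).
  apply/existsP; exists (Ordinal jn) => /=; rewrite E eqxx /=.
  apply/forallP => i; apply/negP => /eqP Hi.
  have := iter_ge_zero (ltnSE (ltn_ord i)) Hi; rewrite E => E0.
  by rewrite E0 in y0.
Qed.
Arguments OmegaP {phi n x y}.

Lemma exists_root phi n y : acyc phi n -> 0 < y -> y <= n ->
  exists m, 0 < iter m (phin phi n) y /\ phin phi n (iter m (phin phi n) y) = 0.
Proof.
move=> Hac y0 yn.
have ex : exists m, iter m (phin phi n) y == 0 by exists n; rewrite iter_n0.
case: (ex_minnP ex) => m0 /eqP Hm Hmin.
case: m0 Hm Hmin => [|m] Hm Hmin; first by move: Hm => /= Hm; rewrite Hm in y0.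
exists m; split; last by rewrite -iterS.
rewrite lt0n; apply/negP => H; have := Hmin _ H; by rewrite ltnn.
Qed.
Arguments exists_root {phi n y}.

Lemma root_uniq phi n x j j' :
  0 < iter j (phin phi n) x -> phin phi n (iter j (phin phi n) x) = 0 ->
  0 < iter j' (phin phi n) x -> phin phi n (iter j' (phin phi n) x) = 0 ->
  iter j (phin phi n) x = iter j' (phin phi n) x.
Proof.
have key : forall a b, a < b -> 0 < iter b (phin phi n) x ->
    phin phi n (iter a (phin phi n) x) = 0 -> False.
  move=> a b ab Hb Ha.
  by rewrite (iter_ge_zero ab (_ : iter a.+1 _ x = 0)) ?iterS in Hb.
move=> r0 fr r0' fr'.
case: (ltngtP j j') => [lt|lt|->] //; exfalso; [exact: key lt r0' fr | exact: key lt r0 fr'].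
Qed.

Definition reach phi n x y := exists j, iter j (phin phi n) x = y.

Lemma orbit_relP phi n (x y : 'I_n.+1) : acyc phi n -> 0 < x -> 0 < y ->
  orbit_rel phi n x y <->
  exists r : 'I_n.+1, [/\ 0 < r, phin phi n r = 0, reach phi n x r & reach phi n y r].
Proof.
move=> Hac x0 y0.
have xn : x <= n by rewrite -ltnS.
have yn : y <= n by rewrite -ltnS.
rewrite /orbit_rel -setI_eq0; split.
- case/set0Pn => w; rewrite inE => /andP [/(OmegaP Hac xn) [w0 [j Ej]] /(OmegaP Hac yn) [_ [j' Ej']]].
  have wn : w <= n by rewrite -ltnS.
  case: (exists_root Hac w0 wn) => m [r0 fr].
  have rn : iter m (phin phi n) w < n.+1 by rewrite ltnS iter_phin_le.
  exists (Ordinal rn) => /=; split => //.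
  + by exists (m + j); rewrite iterD Ej.
  + by exists (m + j'); rewrite iterD Ej'.
- case=> r [r0 fr rx ry]; apply/set0Pn; exists r; rewrite inE.
  by apply/andP; split; apply/(OmegaP Hac _); rewrite ?xn ?yn.
Qed.
Arguments orbit_relP {phi n x y}.

Lemma root_of phi n (z : 'I_n.+1) : acyc phi n -> 0 < z ->
  exists r : 'I_n.+1, [/\ 0 < r, phin phi n r = 0 & reach phi n z r].
Proof.
move=> Hac z0.
case: (exists_root Hac z0 (leq_ord z)) => m [r0 fr].
have rn : iter m (phin phi n) z < n.+1 by rewrite ltnS iter_phin_le ?leq_ord.
by exists (Ordinal rn); split => //; exists m.
Qed.
Arguments root_of {phi n z}.

Lemma reach_uniq phi n x (r r' : 'I_n.+1) :
  0 < r -> phin phi n r = 0 -> 0 < r' -> phin phi n r' = 0 ->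
  reach phi n x r -> reach phi n x r' -> r = r'.
Proof.
move=> r0 fr r0' fr' [a ra] [b rb]; apply/val_inj => /=.
rewrite -ra -rb; apply: root_uniq; by rewrite ?ra ?rb.
Qed.
Arguments reach_uniq {phi n x r r'}.

Lemma orbit_equiv phi n : acyc phi n ->
  {in Dn n & &, equivalence_rel (orbit_rel phi n)}.
Proof.
move=> Hac x y z; rewrite !inE => x0 y0 z0; split.
  apply/(orbit_relP Hac z0 z0).
  case: (root_of Hac z0) => r [r0 fr rz]; by exists r.
move=> /(orbit_relP Hac x0 y0) [r [r0 fr rx ry]]; apply/idP/idP.
- move/(orbit_relP Hac x0 z0) => [r' [r0' fr' rx' rz]].
  apply/(orbit_relP Hac y0 z0); exists r; split => //.
  by rewrite (reach_uniq r0 fr r0' fr' rx rx').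
- move/(orbit_relP Hac y0 z0) => [r' [r0' fr' ry' rz]].
  apply/(orbit_relP Hac x0 z0); exists r; split => //.
  by rewrite (reach_uniq r0 fr r0' fr' ry ry').
Qed.

Arguments orbit_equiv {phi n}.

Lemma card_Dtilde phi n : acyc phi n ->
  #|Dtilde phi n| = #|[set x : 'I_n.+1 | (0 < x) && (phin phi n x == 0)]|.
Proof.
move=> Hac.
set Rs := [set x : 'I_n.+1 | _].
have Heq := orbit_equiv Hac.
have Hpart := equivalence_partitionP Heq.
have HpR := pblock_equivalence_partition Heq.
rewrite /Dtilde.
set P := equivalence_partition _ _ in Hpart HpR *.
case/and3P: Hpart => /eqP Hcov Htriv H0.
have RsD : forall r, r \in Rs -> r \in Dn n.
  by move=> r; rewrite !inE => /andP [].
have -> : P = pblock P @: Rs.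
  apply/setP => B; apply/idP/imsetP.
  - move=> BP.
    have [x xB] : exists x, x \in B.
      apply/set0Pn; apply/negP => /eqP E; by rewrite -E BP in H0.
    have xD : x \in Dn n by rewrite -Hcov; apply/bigcupP; exists B.
    have x0 : 0 < x by move: xD; rewrite inE.
    case: (root_of Hac x0) => r [r0 fr rx].
    have rD : r \in Dn n by rewrite inE.
    exists r; first by rewrite inE r0 fr eqxx.
    have px : pblock P x = B by apply: def_pblock.
    apply/esym/def_pblock => //; rewrite -px HpR //.
    apply/(orbit_relP Hac x0 r0); exists r; split => //; by exists 0.
  - case=> r rR ->; apply: pblock_mem; by rewrite Hcov RsD.
apply: card_in_imset => r r' rR r'R E.
have rD := RsD _ rR; have r'D := RsD _ r'R.
move: rR r'R; rewrite !inE => /andP [r0 /eqP fr] /andP [r0' /eqP fr'].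
have : r' \in pblock P r by rewrite E mem_pblock Hcov.
rewrite HpR // => /(orbit_relP Hac r0 r0') [s [s0 fs rs r's]].
have self : forall t : 'I_n.+1, 0 < t -> phin phi n t = 0 -> reach phi n t s -> t = s.
  move=> t t0 ft ts; apply: (reach_uniq t0 ft s0 fs _ ts); by exists 0.
by rewrite (self r r0 fr rs) (self r' r0' fr' r's).
Qed.

Lemma acyc_of phi n : (forall x : nat, 0 < x -> phi x <> x) -> no_cycle phi n -> acyc phi n.
Proof.
move=> Hfix Hnc x [|[|m]] xn // _.
- rewrite /= /phin; case: ifP => [_|_] E.
  + by apply: (Hfix x) => //; case/andP: xn.
  + by rewrite -E in xn.
- by apply: Hnc.
Qed.

Lemma J_sub phi n k : Jset phi n k.+1 \subset Jset phi n k.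
Proof.
apply/subsetP => x; rewrite !inE => /andP [-> /andP [H1 _]] /=.
rewrite iter_phin_le ?leq_ord // andbT lt0n; apply/negP => /eqP H.
by rewrite (iter_ge_zero (leqnSn k) H) in H1.
Qed.

Arguments J_sub {phi n k}.

Lemma J_step phi n k x : acyc phi n -> x \in Jset phi n k.+1 ->
  exists2 z, z \in Jset phi n k & z \notin Jset phi n k.+1.
Proof.
move=> Hac; rewrite inE => /andP [/andP [x0 xn] /andP [H1 _]].
have ex : exists m, iter (m + k.+1) (phin phi n) x == 0.
  by exists n; rewrite (iter_ge_zero (leq_addr _ _) (iter_n0 Hac xn)).
case: (ex_minnP ex) => m0 /eqP Hm Hmin.
case: m0 Hm Hmin => [|m] Hm Hmin; first by rewrite add0n in Hm; rewrite Hm in H1.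
have zn : iter m.+1 (phin phi n) x < n.+1 by rewrite ltnS iter_phin_le.
have Hk : iter k (phin phi n) (iter m.+1 (phin phi n) x) != 0.
  rewrite -iterD (addnC k) addSnnS; apply/negP => H.
  by have := Hmin _ H; rewrite ltnn.
have Hk1 : iter k.+1 (phin phi n) (iter m.+1 (phin phi n) x) = 0.
  by rewrite -iterD addnC.
have z0 : 0 < iter m.+1 (phin phi n) x.
  rewrite lt0n; apply/negP => /eqP H; by rewrite H iter_phin0 eqxx in Hk.
exists (Ordinal zn); rewrite !inE /= z0 -ltnS zn /=.
- by rewrite lt0n Hk iter_phin_le // -ltnS.
- by move: Hk1 => /= ->.
Qed.

Arguments J_step {phi n k x}.

Lemma J_bound phi n k : acyc phi n -> #|Jset phi n k| <= n - k.
Proof.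
move=> Hac; elim: k => [|k IH].
  rewrite subn0; apply: leq_trans (_ : #|[set~ (ord0 : 'I_n.+1)]| <= n).
    apply: subset_leq_card; apply/subsetP => x; rewrite !inE => /andP [/andP [x0 _] _].
    by rewrite -lt0n.
  by rewrite cardsC1 card_ord.
case: (set_0Vmem (Jset phi n k.+1)) => [->|[x xJ]]; first by rewrite cards0.
case: (J_step Hac xJ) => z zk zk1.
have : Jset phi n k.+1 \proper Jset phi n k by apply/properP; split; [apply: J_sub | exists z].
move/proper_card => lt.
rewrite subnS -ltnS; apply: leq_trans lt _.
case: (n - k) IH => [|d] IH; last by [].
by move: IH; rewrite leqn0 => /eqP ->.
Qed.

Arguments J_bound {phi n k}.
Arguments acyc_of {phi n}.
Arguments card_Dtilde {phi n}.

Theorem proposition2p4 (phi : nat -> nat) (k n : nat) :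
  phi 0 = 0 ->
  (forall x : nat, 0 < x -> phi x <> x) ->
  0 < k -> 0 < n ->
  no_cycle phi n ->
  #|Jset phi n k| <= n - k /\ #|Jset phi n 1| = n - #|Dtilde phi n|.
Proof.
move=> _ Hfix _ _ Hnc.
have Hac := acyc_of Hfix Hnc.
split; first exact: J_bound.
rewrite (card_Dtilde Hac).
set Rs := [set x : 'I_n.+1 | _].
have HD : #|Dn n| = n.
  have -> : Dn n = [set~ ord0] by apply/setP => x; rewrite !inE lt0n.
  by rewrite cardsC1 card_ord.
have E1 : Dn n :&: Jset phi n 1 = Jset phi n 1.
  apply/setIidPr/subsetP => x; rewrite !inE => /andP [/andP [-> _] _] //.
have E2 : Dn n :\: Jset phi n 1 = Rs.
  apply/setP => x; rewrite !inE /= leq_ord phin_le !andbT.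
  by case: (0 < x); rewrite //= lt0n; case: (phin phi n x == 0).
have E := cardsID (Jset phi n 1) (Dn n); rewrite E1 E2 HD in E.
have -> : n - #|Rs| = #|Jset phi n 1| + #|Rs| - #|Rs| by rewrite E.
by rewrite addnK.
Qed.
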